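(* Consider a Boolean control network $\mathbf{x}(t+1)=L\ltimes\mathbf{u}(t)\ltimes\mathbf{x}(t)$, $\mathbf{y}(t)=H\mathbf{x}(t)$, with $L\in\mathcal{L}_{N\times NM}$, $H\in\mathcal{L}_{P\times N}$, and a finite-length reference output trajectory $\mathbf{y}_r(t)=\delta_P^{i_t}$, $t\in[1,T]$. Assume this trajectory is trackable from every initial state in $\mathcal{L}_N$. Define $\mathbf{v}(t)=H^\top\delta_P^{i_t}$, $L_{tot}=L_1\vee\cdots\vee L_M$, $\boldsymbol{\alpha}(1)=\mathbf{v}(1)$, $\boldsymbol{\alpha}(t)=\mathbf{v}(t)\odot(L_{tot}\boldsymbol{\alpha}(t-1))$ for $t\in[2,T]$, and $\boldsymbol{\beta}(T)=\boldsymbol{\alpha}(T)$, $\boldsymbol{\beta}(t)=\boldsymbol{\alpha}(t)\odot(L_{tot}^\top\boldsymbol{\beta}(t+1))$ for $t=T-1,\dots,1$. Define $$\mathcal{T}_{xu}(0)=\{(\delta_N^j,\delta_M^i):(L\ltimes\delta_M^i\ltimes\delta_N^j)\odot\boldsymbol{\beta}(1)\neq\mathbf{0}_N\},$$ $$\mathcal{T}_{xu}(t)=\{(\delta_N^j,\delta_M^i):[\boldsymbol{\beta}(t)]_j\neq0\text{ and }(L\ltimes\delta_M^i\ltimes\delta_N^j)\odot\boldsymbol{\beta}(t+1)\neq\mathbf{0}_N\},\quad t\in[1,T-1],$$ and $\mathcal{T}_u(t,\mathbf{x})=\{\mathbf{u}\in\mathcal{L}_M:(\mathbf{x},\mathbf{u})\in\mathcal{T}_{xu}(t)\}$.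 Then for every initial state $\mathbf{x}_0\in\mathcal{L}_N$, an input sequence $\{\mathbf{u}(t)\}_{t=0}^{T-1}$ ensuring output tracking (i.e. $H\mathbf{x}_t=\mathbf{y}_r(t)$ for all $t\in[1,T]$) is obtained by the recursive procedure: for $t=0,1,\dots,T-1$, choose $\mathbf{u}_t\in\mathcal{T}_u(t,\mathbf{x}_t)$ and set $\mathbf{x}_{t+1}=L\ltimes\mathbf{u}_t\ltimes\mathbf{x}_t$, with $\mathbf{u}(t)=\mathbf{u}_t$.
   Context: $\delta_k^i$ is the $i$-th canonical vector of $\mathbb{R}^k$; $\mathcal{L}_k$ is the set of canonical vectors of $\mathbb{R}^k$; $\mathcal{L}_{k\times q}$ the set of $k\times q$ matrices whose columns lie in $\mathcal{L}_k$. $N=2^n$, $M=2^m$, $P=2^p$. $L=[L_1|\cdots|L_M]$ with $L_i\in\mathcal{L}_{N\times N}$, and $L\ltimes\delta_M^i\ltimes\mathbf{x}=L_i\mathbf{x}$. $\vee$ is entrywise Boolean OR, $\odot$ is the entrywise (Hadamard) product, matrix–vector products are ordinary (only the zero/nonzero pattern of the vectors matters), $[\mathbf{w}]_j$ is the $j$-th entry, $\mathbf{0}_N$ the zero vector. A trajectory is trackable from $\mathbf{x}_0$ if there exist inputs $\mathbf{u}(0),\dots,\mathbf{u}(T-1)\in\mathcal{L}_M$ such that the resulting states $\mathbf{x}(t+1)=L\ltimes\mathbf{u}(t)\ltimes\mathbf{x}(t)$, $\mathbf{x}(0)=\mathbf{x}_0$, satisfy $H\mathbf{x}(t)=\mathbf{y}_r(t)$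 for all $t\in[1,T]$. *)

(* Defs.v *)
(* Encoding:
   - a canonical vector delta_k^j of R^k is represented by its index j : 'I_k;
   - a logical matrix in L_{k x q} is represented by the function sending the
     column index to the row index of the 1 in that column;
   - L = [L_1 | ... | L_M] in L_{N x NM} is  L : 'I_M -> 'I_N -> 'I_N  with
     L i j = index of  L |x delta_M^i |x delta_N^j  (= L_i delta_N^j);
   - H in L_{P x N} is  H : 'I_N -> 'I_P;
   - Boolean (0/1 pattern) vectors of R^N are functions 'I_N -> bool. *)
From mathcomp Require Import all_boot.
Set Implicit Arguments. Unset Strict Implicit. Unset Printing Implicit Defensive.

Section BCN.
Variables (N M P : nat) (L : 'I_M -> 'I_N -> 'I_N) (H : 'I_N -> 'I_P).

Fixpoint traj (u : nat -> 'I_M) (x0 : 'I_N) (t : nat) : 'I_N :=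
  match t with 0 => x0 | t'.+1 => L (u t') (traj u x0 t') end.

Definition trackable_from (T : nat) (i : nat -> 'I_P) (x0 : 'I_N) : Prop :=
  exists u : nat -> 'I_M, forall t, 1 <= t <= T -> H (traj u x0 t) = i t.

(* v(t) = H^T delta_P^{i_t} :  [v(t)]_j <> 0  iff  H delta_N^j = delta_P^{i_t} *)
Definition vvec (i : nat -> 'I_P) (t : nat) : 'I_N -> bool :=
  fun j => H j == i t.

Definition Ltot_entry (k j : 'I_N) : bool := [exists a : 'I_M, L a j == k].

(* zero/nonzero pattern of L_tot w and of L_tot^T w *)
Definition Ltot_mul (w : 'I_N -> bool) : 'I_N -> bool :=
  fun k => [exists j, Ltot_entry k j && w j].
Definition LtotT_mul (w : 'I_N -> bool) : 'I_N -> bool :=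
  fun j => [exists k, Ltot_entry k j && w k].

(* alpha(1) = v(1), alpha(t) = v(t) .* (L_tot alpha(t-1)); alpha 0 is a dummy *)
Fixpoint alpha (i : nat -> 'I_P) (t : nat) : 'I_N -> bool :=
  match t with
  | 0 => vvec i 1
  | 1 => vvec i 1
  | t'.+1 => fun k => vvec i t k && Ltot_mul (alpha i t') k
  end.

(* beta_aux k = beta(T - k) *)
Fixpoint beta_aux (i : nat -> 'I_P) (T k : nat) : 'I_N -> bool :=
  match k with
  | 0 => alpha i T
  | k'.+1 => fun j => alpha i (T - k'.+1) j && LtotT_mul (beta_aux i T k') j
  end.

Definition beta (i : nat -> 'I_P) (T t : nat) : 'I_N -> bool :=
  beta_aux i T (T - t).

Definition hadL_nonzero (a : 'I_M) (j : 'I_N) (w : 'I_N -> bool) : bool :=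
  [exists k, (L a j == k) && w k].

Definition Txu (i : nat -> 'I_P) (T t : nat) (j : 'I_N) (a : 'I_M) : bool :=
  if t == 0 then hadL_nonzero a j (beta i T 1)
  else beta i T t j && hadL_nonzero a j (beta i T t.+1).

Definition Tu (i : nat -> 'I_P) (T t : nat) (x : 'I_N) : pred 'I_M :=
  fun a => Txu i T t x a.

Definition procedure_run (i : nat -> 'I_P) (T : nat) (x0 : 'I_N)
    (xs : nat -> 'I_N) (u : nat -> 'I_M) (t : nat) : Prop :=
  xs 0 = x0 /\
  forall s, s < t -> u s \in Tu i T s (xs s) /\ xs s.+1 = L (u s) (xs s).

End BCN.

(* Main.v *)
Require Import Defs.
From mathcomp Require Import all_boot.
From mathcomp Require Import zify.

Section Aux.
Variables (N M P : nat) (L : 'I_M -> 'I_N -> 'I_N) (H : 'I_N -> 'I_P)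
  (T : nat) (i : nat -> 'I_P).

Lemma alpha_H t j : 1 <= t -> alpha L H i t j -> H j = i t.
Proof.
case: t => [//|[|t]] _ /=; first by move/eqP.
by case/andP=> /eqP.
Qed.

Lemma alpha_S t j : 1 <= t -> alpha L H i t.+1 j =
  vvec H i t.+1 j && Ltot_mul L (alpha L H i t) j.
Proof. by case: t. Qed.

Lemma beta_T : beta L H i T T = alpha L H i T.
Proof. by rewrite /beta subnn. Qed.

Lemma beta_S t j : t < T -> beta L H i T t j =
  alpha L H i t j && LtotT_mul L (beta L H i T t.+1) j.
Proof.
move=> ltT; rewrite /beta.
have -> : T - t = (T - t.+1).+1 by rewrite subnS prednK // subn_gt0.
simpl. have -> : T - (T - t.+1).+1 = t by lia.
by [].
Qed.

Lemma beta_alpha t j : t <= T -> beta L H i T t j -> alpha L H i t j.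
Proof.
rewrite leq_eqVlt; case/orP=> [/eqP->|lt]; first by rewrite beta_T.
by rewrite beta_S // => /andP[].
Qed.

Lemma traj_alpha u x0 :
  (forall t, 1 <= t <= T -> H (traj L u x0 t) = i t) ->
  forall t, 1 <= t <= T -> alpha L H i t (traj L u x0 t).
Proof.
move=> Htr; elim=> [//|t IH] /andP[t1 tT].
case: t IH t1 tT => [|t] IH _ tT.
  by rewrite /= /vvec; apply/eqP; apply: (Htr 1); rewrite tT.
rewrite alpha_S //; apply/andP; split.
  by rewrite /vvec; apply/eqP; apply: (Htr t.+2); rewrite tT.
apply/existsP; exists (traj L u x0 t.+1).
rewrite IH; last by rewrite /= ltnW.
by rewrite andbT; apply/existsP; exists (u t.+1).
Qed.

Lemma traj_beta u x0 :
  (forall t, 1 <= t <= T -> H (traj L u x0 t) = i t) ->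
  forall k, k < T -> beta L H i T (T - k) (traj L u x0 (T - k)).
Proof.
move=> Htr; elim=> [|k IH] lt.
  by rewrite subn0 beta_T; apply: traj_alpha => //; rewrite lt leqnn.
have lt1 : T - k.+1 < T by lia.
rewrite beta_S //; apply/andP; split.
  apply: traj_alpha => //; apply/andP; split; lia.
have e : (T - k.+1).+1 = T - k by lia.
apply/existsP; exists (traj L u x0 (T - k)); rewrite e IH; last by lia.
rewrite andbT.
by apply/existsP; exists (u (T - k.+1)); rewrite -e.
Qed.

End Aux.

Theorem corollary1 (N M P : nat) (L : 'I_M -> 'I_N -> 'I_N) (H : 'I_N -> 'I_P)
    (T : nat) (i : nat -> 'I_P) :
  1 <= T ->
  (forall x0 : 'I_N, trackable_from L H T i x0) ->
  forall x0 : 'I_N,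
    (* the procedure can always be continued: T_u(t, x_t) is nonempty *)
    (forall (t : nat) (xs : nat -> 'I_N) (u : nat -> 'I_M),
        t < T -> procedure_run L H i T x0 xs u t ->
        exists a : 'I_M, a \in Tu L H i T t (xs t)) /\
    (* every input sequence produced by the procedure ensures tracking *)
    (forall (xs : nat -> 'I_N) (u : nat -> 'I_M),
        procedure_run L H i T x0 xs u T ->
        forall t, 1 <= t <= T -> H (xs t) = i t).
Proof.
move=> T1 Htr x0.
have inv : forall t xs u, procedure_run L H i T x0 xs u t ->
    forall s, s < t -> beta L H i T s.+1 (xs s.+1).
  move=> t xs u [_ Hr] s /Hr [Hin ->].
  move: Hin; rewrite unfold_in /Tu /Txu.
  have Hh : hadL_nonzero L (u s) (xs s) (beta L H i T s.+1) ->
      beta L H i T s.+1 (L (u s) (xs s)).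
    by case/existsP=> k /andP[/eqP ->].
  by case: eqP => [->|_ /andP[_]] /existsP[k /andP[/eqP ->]].
split.
  move=> [|t] xs u tT Hrun.
    have [u' Hu'] := Htr x0.
    have := @traj_beta _ _ _ L H T i u' x0 Hu' T.-1.
    have -> : T - T.-1 = 1 by lia.
    move=> /(_ ltac:(lia)) /= Hb.
    exists (u' 0); rewrite unfold_in /Tu /Txu /= (proj1 Hrun).
    by apply/existsP; exists (L (u' 0) x0); rewrite eqxx.
  have := inv _ _ _ Hrun t (ltnSn _); rewrite beta_S // => /andP[_].
  case/existsP=> k /andP[/existsP[a /eqP Hk] Hb].
  exists a; rewrite unfold_in /Tu /Txu /= (inv _ _ _ Hrun t (ltnSn _)) /=.
  by apply/existsP; exists k; rewrite Hk eqxx.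
move=> xs u Hrun [|t] // /andP[_ tT].
apply: (@alpha_H _ _ _ L) => //; apply: (@beta_alpha _ _ _ L H T) => //; exact: (inv _ _ _ Hrun).
Qed.
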